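(* Let $G=(V,E)$ be a graph, $S\subseteq V$, and let $M_a,M_b$ be matchings of $G$ such that $M_b$ hits at least $s\le|S|$ nodes of $S$. Then for every integer $k\ge1$ there is a matching $M_c$ of $G$, computable by a deterministic LOCAL algorithm in $O(k)$ rounds, such that: (i) $|M_c|\ge|M_a|$; (ii) $|V(M_a)\setminus(V(M_c)\cup S)|\le|(S\cap V(M_c))\setminus V(M_a)|$; (iii) $M_c$ hits at least $(1-1/k)s$ nodes of $S$.
   Context: For a matching $M$, $V(M)$ denotes the set of nodes that are endpoints of edges of $M$; $M$ hits $v$ iff $v\in V(M)$. LOCAL model: synchronous rounds, unique identifiers, unbounded messages; each node knows its incident edges in $M_a$ and $M_b$ and whether it lies in $S$. *)

(* Defs.v *)
From mathcomp Require Import all_boot.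
Set Implicit Arguments. Unset Strict Implicit. Unset Printing Implicit Defensive.

Definition is_graph (T : finType) (e : rel T) : Prop :=
  (forall u v, e u v = e v u) /\ (forall u, ~~ e u u).

Definition is_matching (T : finType) (e : rel T) (M : rel T) : Prop :=
  [/\ forall u v, M u v -> e u v,
      forall u v, M u v = M v u
    & forall u v w, M u v -> M u w -> v = w].

Definition edges_of (T : finType) (M : rel T) : {set {set T}} :=
  [set [set p.1; p.2] | p in [set p : T * T | M p.1 p.2]].

Definition msize (T : finType) (M : rel T) : nat := #|edges_of M|.

Definition VM (T : finType) (M : rel T) : {set T} := [set v | [exists u, M v u]].

Definition ball (T : finType) (e : rel T) (r : nat) (v : T) : {set T} :=
  iter r (fun X : {set T} => X :|: [set w | [exists x in X, e x w]]) [set v].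

Definition valid_input (T : finType) (e : rel T) (Ma Mb : rel T) : Prop :=
  [/\ is_graph e, is_matching e Ma & is_matching e Mb].

(* An algorithm on node set T (node identifiers = elements of T): maps
   (e, S, Ma, Mb) to the output relation Mc (each node v outputs its incident
   Mc-edges, i.e. the predicate Mc v). *)
Definition algorithm (T : finType) := rel T -> {set T} -> rel T -> rel T -> rel T.

(* r-round LOCAL computability: the output of every node v depends only on the
   input restricted to the radius-r ball around v (the topology incident to
   those nodes, their membership in S, and their incident Ma/Mb edges). *)
Definition local_in (T : finType) (r : nat) (A : algorithm T) : Prop :=
  forall (e e' : rel T) (S S' : {set T}) (Ma Ma' Mb Mb' : rel T) (v : T),
    valid_input e Ma Mb -> valid_input e' Ma' Mb' ->
    (forall u, u \in ball e r v ->
       [/\ u \in S = (u \in S'),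
           forall w, e u w = e' u w,
           forall w, Ma u w = Ma' u w
         & forall w, Mb u w = Mb' u w]) ->
    forall w, A e S Ma Mb v w = A e' S' Ma' Mb' v w.

(* Main.v *)
Require Import Defs.
From mathcomp Require Import all_boot zify.
Set Implicit Arguments. Unset Strict Implicit. Unset Printing Implicit Defensive.

Section Alg.
Variables (T : finType) (k : nat).
Implicit Types (S : {set T}) (Ma Mb : rel T).

Definition partner (M : rel T) (u : T) : option T := [pick w | M u w].
Definition stepM Ma Mb (t : nat) : rel T := if odd t then Ma else Mb.
Fixpoint walk Ma Mb (y : T) (t : nat) : option T :=
  match t with
  | 0 => Some y
  | t'.+1 => if walk Ma Mb y t' is Some z then partner (stepM Ma Mb t') z else None
  end.
Definition good S Ma Mb y j : bool :=
  if walk Ma Mb y (2 * j) is Some c then (c \notin S) || (partner Mb c == None) else true.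
Definition J S Ma Mb y := (find (good S Ma Mb y) (iota 1 k)).+1.
Definition flip S Ma Mb y :=
  [&& y \in S, partner Ma y == None & partner Mb y != None].
Definition cf S Ma Mb u := [exists y, flip S Ma Mb y &&
  [exists i : 'I_(2 * k + 2), (i < 2 * J S Ma Mb y) && (walk Ma Mb y i == Some u)]].
Definition cc S Ma Mb u := [exists y, flip S Ma Mb y &&
  (walk Ma Mb y (2 * J S Ma Mb y) == Some u)].
Definition Mc0 S Ma Mb u v :=
  if cf S Ma Mb u then Mb u v else if cc S Ma Mb u then false else Ma u v.
Definition Mc S Ma Mb u v := Mc0 S Ma Mb u v && Mc0 S Ma Mb v u.
Definition Alg : algorithm T := fun e S Ma Mb => Mc S Ma Mb.

Lemma J_le S Ma Mb y : J S Ma Mb y <= k.+1.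
Proof. by rewrite /J ltnS; have := find_size (good S Ma Mb y) (iota 1 k); rewrite size_iota. Qed.

Lemma J_ge S Ma Mb y : 0 < J S Ma Mb y.
Proof. by []. Qed.

Lemma partner_some (M : rel T) u w : partner M u = Some w -> M u w.
Proof. by rewrite /partner; case: pickP => // x Hx [<-]. Qed.

Lemma partner_none (M : rel T) u w : partner M u = None -> M u w = false.
Proof. by rewrite /partner; case: pickP => // H _; apply: H. Qed.

Lemma walk_back Ma Mb y t u : walk Ma Mb y t.+1 = Some u ->
  exists z, walk Ma Mb y t = Some z /\ stepM Ma Mb t z u.
Proof.
by rewrite /=; case: (walk Ma Mb y t) => // z /partner_some H; exists z.
Qed.

Lemma partner_eq (e : rel T) (M : rel T) u w : is_matching e M -> M u w -> partner M u = Some w.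
Proof.
case=> _ _ Hu Huw; rewrite /partner; case: pickP => [x Hx|H].
  by rewrite (Hu _ _ _ Huw Hx).
by rewrite H in Huw.
Qed.

Lemma walk_fwd (e : rel T) Ma Mb y t z u : is_matching e Ma -> is_matching e Mb ->
  walk Ma Mb y t = Some z -> stepM Ma Mb t z u -> walk Ma Mb y t.+1 = Some u.
Proof.
move=> HA HB /= -> H; apply: (partner_eq (e:=e)) => //.
by rewrite /stepM; case: (odd t).
Qed.

End Alg.

Section Size.
Variables (T : finType) (e : rel T).
Hypothesis He : is_graph e.

Lemma VM_size (M : rel T) : is_matching e M -> #|VM M| = 2 * msize M.
Proof.
move=> HM; case: (HM) => Hsub Hsym Hu.
rewrite /msize mulnC; apply: card_uniform_partition.
  move=> E /imsetP [p]; rewrite inE => Hp ->; rewrite cards2.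
  case: eqP => // Heq; move: Hp; rewrite Heq => /Hsub.
  by case: He => _ /(_ p.2) /negbTE ->.
apply/and3P; split.
- apply/eqP/setP => x; rewrite /cover; apply/bigcupP/idP.
    case=> E /imsetP [p]; rewrite inE => Hp -> /set2P [] ->; rewrite inE; apply/existsP.
      by exists p.2.
    by exists p.1; rewrite Hsym.
  rewrite inE => /existsP [w Hw]; exists [set x; w]; last by rewrite set21.
  by apply/imsetP; exists (x, w); rewrite // inE.
- apply/trivIsetP => E1 E2 /imsetP [p]; rewrite inE => Hp -> /imsetP [q]; rewrite inE => Hq -> Hne.
  apply/pred0P => x /=; apply/negP => /andP [/set2P Hx1 /set2P Hx2].
  move/negP: Hne; apply; apply/eqP.
  case: p Hp Hx1 => a b /= Hab Hx1; case: q Hq Hx2 => c d /= Hcd Hx2.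
  case: Hx1 => Ha; case: Hx2 => Hc; subst x.
  + subst c; by rewrite (Hu _ _ _ Hab Hcd).
  + subst d; rewrite -Hsym in Hcd; by rewrite (Hu _ _ _ Hab Hcd) setUC.
  + subst c; rewrite -Hsym in Hab; by rewrite (Hu _ _ _ Hab Hcd) setUC.
  + subst d; rewrite -Hsym in Hab; rewrite -Hsym in Hcd; by rewrite (Hu _ _ _ Hab Hcd).
- apply/imsetP => -[p _ H]; have := set21 p.1 p.2; by rewrite -H inE.
Qed.

End Size.

Section Props.
Variables (T : finType) (k : nat) (e : rel T) (S : {set T}) (Ma Mb : rel T).
Hypotheses (He : is_graph e) (HA : is_matching e Ma) (HB : is_matching e Mb).

Local Notation walk := (walk Ma Mb).
Local Notation J := (J k S Ma Mb).
Local Notation flip := (flip S Ma Mb).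
Local Notation cf := (cf k S Ma Mb).
Local Notation cc := (cc k S Ma Mb).
Local Notation Mc := (Mc k S Ma Mb).
Local Notation Mc0 := (Mc0 k S Ma Mb).

Lemma msym (M : rel T) u v : is_matching e M -> M u v -> M v u.
Proof. by case=> _ Hs _; rewrite Hs. Qed.

Lemma muniq (M : rel T) u v w : is_matching e M -> M u v -> M u w -> v = w.
Proof. by case=> _ _ Hu; apply: Hu. Qed.

Lemma stepM_m t : is_matching e (stepM Ma Mb t).
Proof. by rewrite /stepM; case: (odd t). Qed.

Lemma walk_inj y y' i i' u : partner Ma y = None -> partner Ma y' = None ->
  odd i = odd i' -> walk y i = Some u -> walk y' i' = Some u -> y = y' /\ i = i'.
Proof.
move=> Hy Hy'; elim: i i' u => [|i IH] [|i'] u /=.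
- by move=> _ [->] [->].
- move=> Hod [<-] /(@walk_back _ Ma Mb y' i' y) [z [_ Hz]].
  have Ho : odd i' by move: Hod => /= /esym/negbFE.
  move: Hz; rewrite /stepM Ho => Hz.
  by have:= msym HA Hz; rewrite (partner_none z Hy).
- move=> Hod /(@walk_back _ Ma Mb y i u) [z [_ Hz]] [Hu].
  have Ho : odd i by move: Hod => /= /negbFE.
  move: Hz; rewrite /stepM Ho -Hu => Hz.
  by have:= msym HA Hz; rewrite (partner_none z Hy').
- move=> Hod0; have Hod : odd i = odd i' by move: Hod0 => /=; case: (odd i); case: (odd i').
  move=> /(@walk_back _ Ma Mb y i u) [z [Hz Hzu]] /(@walk_back _ Ma Mb y' i' u) [z' [Hz' Hzu']].
  move: Hzu'; rewrite /stepM -Hod -/(stepM Ma Mb i) => Hzu'.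
  have Ez : z = z' by apply: (muniq (stepM_m i)) (msym (stepM_m i) Hzu) (msym (stepM_m i) Hzu').
  by subst z'; case: (IH i' z Hod Hz Hz') => -> ->.
Qed.


Lemma cf_intro y i u : flip y -> i < 2 * J y -> walk y i = Some u -> cf u.
Proof.
move=> Hf Hi Hw; apply/existsP; exists y; rewrite Hf /=.
have Hik : i < 2 * k + 2 by have := J_le k S Ma Mb y; lia.
by apply/existsP; exists (Ordinal Hik); rewrite /= Hi Hw eqxx.
Qed.

Lemma cf_elim u : cf u -> exists y i, [/\ flip y, i < 2 * J y & walk y i = Some u].
Proof.
case/existsP=> y /andP [Hf /existsP [i /andP [Hi /eqP Hw]]].
by exists y, i.
Qed.

Lemma cc_intro y u : flip y -> walk y (2 * J y) = Some u -> cc u.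
Proof. by move=> Hf Hw; apply/existsP; exists y; rewrite Hf Hw eqxx. Qed.

Lemma cc_elim u : cc u -> exists y, flip y /\ walk y (2 * J y) = Some u.
Proof. by case/existsP=> y /andP [Hf /eqP Hw]; exists y. Qed.

Lemma good_before y j : 0 < j -> j < J y -> good S Ma Mb y j = false.
Proof.
move=> Hj HjJ.
have Hf : j.-1 < find (good S Ma Mb y) (iota 1 k) by rewrite /J in HjJ; lia.
have := before_find 0 Hf.
have Hk : j.-1 < k by have := find_size (good S Ma Mb y) (iota 1 k); rewrite size_iota; lia.
by rewrite nth_iota // (_ : 1 + j.-1 = j) //; lia.
Qed.

Lemma good_J y : J y <= k -> good S Ma Mb y (J y).
Proof.
move=> HJ.
have Hh : has (good S Ma Mb y) (iota 1 k) by rewrite has_find size_iota; rewrite /J in HJ; lia.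
have := nth_find 0 Hh.
rewrite nth_iota; last by rewrite /J in HJ; lia.
by rewrite /J add1n.
Qed.

Lemma flip_pa y : flip y -> partner Ma y = None.
Proof. by case/and3P=> _ /eqP. Qed.

Lemma cf_mb u : cf u -> exists w, Mb u w.
Proof.
case/cf_elim=> y [[|i] [Hf Hi Hw]].
  move: Hw => [<-]; case/and3P: Hf => _ _.
  by case Hp: (partner Mb y) => [w|] // _; exists w; apply: partner_some.
case: (boolP (odd i)) => Ho.
  case: (walk_back Hw) => z [Hz Hzu].
  move: Hzu; rewrite /stepM Ho => Hzu.
  have Hj0 : 0 < (i.+1)./2 by case: i Ho {Hi Hw Hz} => [|i] //.
  have Hi2 : i.+1 = 2 * (i.+1)./2.
    by rewrite -{1}(odd_double_half i.+1) /= Ho /= -muln2 mulnC.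
  have Hg := good_before Hj0 (_ : (i.+1)./2 < J y).
  move: Hg; rewrite /good -Hi2 Hw => /(_ ltac:(lia)).
  by case Hp: (partner Mb u) => [w|]; [exists w; apply: partner_some|rewrite eqxx orbT].
case: (walk_back Hw) => z [Hz Hzu].
move: Hzu; rewrite /stepM (negbTE Ho) => Hzu.
by exists z; apply: msym HB Hzu.
Qed.

Lemma cf_partner u w : cf u -> Mb u w -> Mc u w.
Proof.
move=> Hcf Huw.
have Hwcf : cf w.
  case/cf_elim: Hcf => y [i [Hf Hi Hw]].
  case: (boolP (odd i)) => Ho.
    case: i Ho Hi Hw => [|i] // Ho Hi Hw.
    case: (walk_back Hw) => z [Hz Hzu].
    move: Hzu; rewrite /stepM (_ : odd i = false); last by move: Ho => /= /negbTE.
    move=> Hzu; have Ez : z = w by apply: (muniq HB) (msym HB Hzu) Huw.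
    by subst z; apply: (cf_intro Hf _ Hz); lia.
  have Hw1 : walk y i.+1 = Some w.
    by apply: (walk_fwd (e:=e)) Hw _ => //; rewrite /stepM (negbTE Ho).
  apply: (cf_intro Hf _ Hw1).
  have : i.+1 != 2 * J y.
    by apply/eqP => Heq; move: (congr1 odd Heq); rewrite oddM /= (negbTE Ho).
  lia.
by rewrite /Mc /Mc0 Hcf Hwcf Huw (msym HB Huw).
Qed.

Lemma inVM (M : rel T) u w : M u w -> u \in VM M.
Proof. by move=> H; rewrite inE; apply/existsP; exists w. Qed.

Lemma cf_cov u : cf u -> u \in VM Mc.
Proof. by move=> H; case: (cf_mb H) => w Hw; apply: (inVM (cf_partner H Hw)). Qed.

Lemma flip_cf y : flip y -> cf y.
Proof. by move=> Hf; apply: (@cf_intro y 0 y Hf _ (erefl _)); have := J_ge k S Ma Mb y; lia. Qed.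

Lemma notVM_none (M : rel T) u : u \notin VM M -> partner M u = None.
Proof. by case Hp: (partner M u) => [w|] // /negP []; apply: (inVM (partner_some Hp)). Qed.

Lemma VM_ex (M : rel T) u : u \in VM M -> exists w, M u w.
Proof. by rewrite inE => /existsP. Qed.

Lemma flip_cov y : flip y -> [/\ y \in VM Mc, y \in S & y \notin VM Ma].
Proof.
move=> Hf; split; first exact: cf_cov (flip_cf Hf).
  by case/and3P: Hf.
apply/negP => /VM_ex [w Hw].
by have := partner_eq HA Hw; rewrite (flip_pa Hf).
Qed.

Lemma lost u : u \notin VM Mc -> (u \in VM Ma) || ((u \in S) && (u \in VM Mb)) -> cc u.
Proof.
move=> Hn Hu.
case Hcf: (cf u); first by rewrite (cf_cov Hcf) in Hn.
case Hcc: (cc u) => //; exfalso.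
case: (boolP (u \in VM Ma)) => HuA.
  case/VM_ex: HuA => v Huv.
  have Hvcf : cf v = false.
    case Hcfv: (cf v) => //; case: (cf_elim Hcfv) => y [i [Hf Hi Hw]].
    case: (boolP (odd i)) => Ho.
      have Hw1 : walk y i.+1 = Some u.
        by apply: (walk_fwd (e:=e)) Hw _ => //; rewrite /stepM Ho; apply: msym HA Huv.
      case: (ltnP i.+1 (2 * J y)) => Hlt.
        by rewrite (cf_intro Hf Hlt Hw1) in Hcf.
      have Heq : i.+1 = 2 * J y by lia.
      by rewrite Heq in Hw1; rewrite (cc_intro Hf Hw1) in Hcc.
    case: i Ho Hi Hw => [|p] Ho Hi Hw.
      move: Hw => [Hyv]; subst v.
      by have := partner_eq HA (msym HA Huv); rewrite (flip_pa Hf).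
    case: (walk_back Hw) => z [Hz Hzv].
    move: Hzv; rewrite /stepM (_ : odd p = true); last by move: Ho => /= /negPn.
    move=> Hzv; have Ez : z = u by apply: (muniq HA) (msym HA Hzv) (msym HA Huv).
    by subst z; rewrite (cf_intro Hf (ltnW Hi) Hz) in Hcf.
  have Hvcc : cc v = false.
    case Hccv: (cc v) => //; case: (cc_elim Hccv) => y [Hf Hw].
    have HJ := J_ge k S Ma Mb y.
    have Hp : 2 * J y = (2 * J y).-1.+1 by lia.
    rewrite Hp in Hw; case: (walk_back Hw) => z [Hz Hzv].
    have Ho : odd (2 * J y).-1.
      by rewrite (_ : (2 * J y).-1 = (2 * (J y).-1).+1); [rewrite oddS oddM|lia].
    move: Hzv; rewrite /stepM Ho => Hzv.
    have Ez : z = u by apply: (muniq HA) (msym HA Hzv) (msym HA Huv).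
    subst z; have Hlt : (2 * J y).-1 < 2 * J y by lia.
    by rewrite (cf_intro Hf Hlt Hz) in Hcf.
  move/negP: Hn; apply; apply: (@inVM _ u v).
  by rewrite /Mc /Mc0 Hcf Hcc Hvcf Hvcc Huv (msym HA Huv).
move: Hu; rewrite (negbTE HuA) /= => /andP [HS HuB].
have Hf : flip u.
  rewrite /flip HS (notVM_none HuA) eqxx /=.
  by case/VM_ex: HuB => w Hw; rewrite (partner_eq HB Hw).
by rewrite (flip_cf Hf) in Hcf.
Qed.

Lemma lost_S u y : flip y -> walk y (2 * J y) = Some u -> u \in S -> u \in VM Mb ->
  J y = k.+1 /\ forall j, j < k -> exists c, [/\ walk y (2 * j) = Some c, c \in S & c \in VM Mb].
Proof.
move=> Hf Hw HS HuB.
have HJ : J y = k.+1.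
  have := J_le k S Ma Mb y; rewrite leq_eqVlt ltnS => /orP [/eqP //|HJ].
  have := good_J HJ; rewrite /good Hw HS /=.
  by case/VM_ex: HuB => w Hw'; rewrite (partner_eq HB Hw').
split=> // j Hj.
case: j Hj => [|j] Hj.
  exists y; case/and3P: Hf => HyS _ Hb; split=> //.
  by case Hp: (partner Mb y) Hb => [w|] // _; apply: (inVM (partner_some Hp)).
have := good_before (_ : 0 < j.+1) (_ : j.+1 < J y); rewrite /good.
case: (walk y (2 * j.+1)) => [c|]; last by move=> /(_ isT); rewrite HJ; move=> /(_ ltac:(lia)).
move=> /(_ isT); rewrite HJ => /(_ ltac:(lia)) /negbT.
rewrite negb_or negbK => /andP [Hc Hb]; exists c; split=> //.
by case Hp: (partner Mb c) Hb => [w|] // _; apply: (inVM (partner_some Hp)).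
Qed.

End Props.

Lemma inj_card (T1 T2 : finType) (A : {set T1}) (B : {set T2}) (f : T1 -> T2) :
  {in A &, injective f} -> (forall x, x \in A -> f x \in B) -> #|A| <= #|B|.
Proof.
move=> Hi Hf; rewrite -(card_in_imset Hi); apply: subset_leq_card.
by apply/subsetP => _ /imsetP [x Hx ->]; apply: Hf.
Qed.

Section Main.
Variables (T : finType) (k : nat) (e : rel T) (S : {set T}) (Ma Mb : rel T).
Hypotheses (He : is_graph e) (HA : is_matching e Ma) (HB : is_matching e Mb).

Local Notation walk := (walk Ma Mb).
Local Notation J := (J k S Ma Mb).
Local Notation flip := (flip S Ma Mb).
Local Notation cf := (cf k S Ma Mb).
Local Notation cc := (cc k S Ma Mb).
Local Notation Mc := (Mc k S Ma Mb).
Local Notation Mc0 := (Mc0 k S Ma Mb).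

Lemma Mc_matching : is_matching e Mc.
Proof.
case: HA => HAs _ HAu; case: HB => HBs _ HBu.
split.
- move=> u v /andP [H _]; move: H; rewrite /Mc0.
  by case: (cf u); [apply: HBs|case: (cc u) => //; apply: HAs].
- by move=> u v; rewrite /Mc andbC.
- move=> u v w /andP [H1 _] /andP [H2 _]; move: H1 H2; rewrite /Mc0.
  by case: (cf u); [apply: HBu|case: (cc u) => //; apply: HAu].
Qed.

Definition g u := odflt u [pick y | flip y && (walk y (2 * J y) == Some u)].

Lemma g_spec u : u \notin VM Mc -> (u \in VM Ma) || ((u \in S) && (u \in VM Mb)) ->
  flip (g u) /\ walk (g u) (2 * J (g u)) = Some u.
Proof.
move=> Hn Hu; case: (cc_elim (lost HA HB Hn Hu)) => y [Hf Hw].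
rewrite /g; case: pickP => [z /andP [Hz /eqP Hz2] //|H].
by move: (H y); rewrite Hf Hw eqxx.
Qed.

Lemma prop_i_ii : msize Ma <= msize Mc /\
  #|VM Ma :\: (VM Mc :|: S)| <= #|(S :&: VM Mc) :\: VM Ma|.
Proof.
have Hor x : x \in VM Ma -> (x \in VM Ma) || ((x \in S) && (x \in VM Mb)) by move=> ->.
have Hlost : #|VM Ma :\: VM Mc| <= #|(S :&: VM Mc) :\: VM Ma|.
  apply: (@inj_card _ _ _ _ g).
    move=> u v /setDP [HuA Hu] /setDP [HvA Hv] Hg.
    have [_ Hwu] := g_spec Hu (Hor _ HuA).
    have [_ Hwv] := g_spec Hv (Hor _ HvA).
    by rewrite Hg Hwv in Hwu; case: Hwu.
  move=> u /setDP [HuA Hu].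
  have [Hf _] := g_spec Hu (Hor _ HuA).
  have [H1 H2 H3] := flip_cov k HA HB Hf.
  by rewrite in_setD in_setI H1 H2 H3.
split.
- rewrite -(leq_pmul2l (_ : 0 < 2)) // -!(VM_size He) //; last exact: Mc_matching.
  rewrite -(cardsID (VM Mc) (VM Ma)) -(cardsID (VM Ma) (VM Mc)) setIC leq_add2l.
  apply: (leq_trans Hlost); apply: subset_leq_card; apply/subsetP => x.
  by rewrite !inE => /andP [-> /andP [_ ->]].
- apply: leq_trans Hlost; apply: subset_leq_card; apply/subsetP => x.
  by rewrite !inE negb_or => /andP [/andP [-> _] ->].
Qed.

Lemma prop_iii : k * #|(S :&: VM Mb) :\: VM Mc| <= #|S :&: VM Mb|.
Proof.
pose h (p : T * 'I_k) := odflt p.1 (walk (g p.1) (2 * p.2)).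
have Hspec p : p \in setX ((S :&: VM Mb) :\: VM Mc) [set: 'I_k] ->
    [/\ flip (g p.1), walk (g p.1) (2 * J (g p.1)) = Some p.1 &
     exists c, [/\ walk (g p.1) (2 * p.2) = Some c, h p = c, c \in S & c \in VM Mb]].
  case: p => a i; rewrite in_setX in_setT andbT /= => /setDP [/setIP [HS HB'] Hn].
  have Hor : (a \in VM Ma) || ((a \in S) && (a \in VM Mb)) by rewrite HS HB' orbT.
  have [Hf Hw] := g_spec Hn Hor.
  split=> //.
  have [_ Hall] := lost_S HB Hf Hw HS HB'.
  case: (Hall i (ltn_ord _)) => c [Hc HcS HcB]; exists c; split=> //.
  by rewrite /h Hc.
have Hc : #|setX ((S :&: VM Mb) :\: VM Mc) [set: 'I_k]| = #|(S :&: VM Mb) :\: VM Mc| * k.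
  by rewrite cardsX cardsT card_ord.
rewrite mulnC -Hc.
apply: (@inj_card _ _ _ _ h).
  move=> p q Hp Hq Hpq.
  have [Hfp Hwp [c [Hcp Hhp _ _]]] := Hspec p Hp.
  have [Hfq Hwq [d [Hcq Hhq _ _]]] := Hspec q Hq.
  rewrite Hhp Hhq in Hpq; rewrite -Hpq in Hcq.
  have Hodd : odd (2 * p.2) = odd (2 * q.2) by rewrite !oddM.
  have [Hy Hj] := walk_inj HA HB (flip_pa Hfp) (flip_pa Hfq) Hodd Hcp Hcq.
  rewrite Hy Hwq in Hwp; case: Hwp => Hpq1.
  move: Hpq1 Hj; case: p {Hp Hfp Hcp Hhp Hy Hpq Hodd} => a i; case: q {Hq Hfq Hcq Hhq Hwq} => b j /= -> Hij.
  by congr pair; apply: val_inj => /=; lia.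
move=> p Hp; have [_ _ [c [_ -> HcS HcB]]] := Hspec p Hp.
by rewrite in_setI HcS HcB.
Qed.

End Main.

Section Local.
Variable T : finType.

Lemma ball_S (e : rel T) r v :
  ball e r.+1 v = ball e r v :|: [set w | [exists x in ball e r v, e x w]].
Proof. by []. Qed.

Lemma ball_0 (e : rel T) v : v \in ball e 0 v.
Proof. by rewrite /ball /= set11. Qed.

Lemma ball_mono (e : rel T) r r' v x : r <= r' -> x \in ball e r v -> x \in ball e r' v.
Proof.
move=> /subnK <-; elim: (r' - r) => [//|d IH] Hx.
by rewrite addSn ball_S inE IH.
Qed.

Lemma ball_nb (e : rel T) r v x w : x \in ball e r v -> e x w -> w \in ball e r.+1 v.
Proof.
by move=> Hx Hxw; rewrite ball_S !inE; apply/orP; right; apply/existsP; exists x; rewrite Hx.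
Qed.

Lemma ball_eq (e e' : rel T) R v :
  (forall u, u \in ball e R v -> forall w, e u w = e' u w) ->
  forall r, r <= R -> ball e r v = ball e' r v.
Proof.
move=> H; elim=> [//|r IH] Hr.
rewrite !ball_S -IH ?(ltnW Hr) //; congr (_ :|: _); apply/setP => w; rewrite !inE.
apply: eq_existsb => x; case Hx: (x \in ball e r v) => //=.
by apply: H; apply: ball_mono Hx; apply: ltnW.
Qed.

Definition agree (e e' : rel T) (S S' : {set T}) (Ma Ma' Mb Mb' : rel T) R v :=
  forall u, u \in ball e R v ->
    [/\ (u \in S) = (u \in S'), forall w, e u w = e' u w,
        forall w, Ma u w = Ma' u w & forall w, Mb u w = Mb' u w].

Lemma agree_sym e e' S S' Ma Ma' Mb Mb' R v :
  agree e e' S S' Ma Ma' Mb Mb' R v -> agree e' e S' S Ma' Ma Mb' Mb R v.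
Proof.
move=> H u; rewrite -(@ball_eq e e' R v _ R) //; last by move=> x /H [].
by case/H => H1 H2 H3 H4; split=> // w; rewrite ?H2 ?H3 ?H4.
Qed.

Lemma stepM_sub (e Ma Mb : rel T) t z w : is_matching e Ma -> is_matching e Mb ->
  stepM Ma Mb t z w -> e z w.
Proof. by case=> HA _ _ [HB _ _]; rewrite /stepM; case: (odd t); [apply: HA|apply: HB]. Qed.

Lemma walk_agree e e' S S' Ma Ma' Mb Mb' R v y r :
  is_matching e Ma -> is_matching e Mb ->
  agree e e' S S' Ma Ma' Mb Mb' R v -> y \in ball e r v ->
  forall t, r + t <= R -> walk Ma Mb y t = walk Ma' Mb' y t /\
    (forall z, walk Ma Mb y t = Some z -> z \in ball e (r + t) v).
Proof.
move=> HA HB Hag Hy; elim=> [|t IH] Ht.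
  by split=> // z [<-]; rewrite addn0.
have [IH1 IH2] := IH (ltac:(lia) : r + t <= R).
rewrite /= -IH1; case Hw: (walk Ma Mb y t) => [z|]; last by [].
have Hz := IH2 z Hw.
have HzR : z \in ball e R v by apply: ball_mono Hz; lia.
have [_ _ H3 H4] := Hag z HzR.
have Hp : partner (stepM Ma Mb t) z = partner (stepM Ma' Mb' t) z.
  by apply: eq_pick => w /=; rewrite /stepM; case: (odd t); [apply: H3|apply: H4].
split; first by [].
move=> w Hpw; rewrite addnS; apply: ball_nb Hz _.
exact: (stepM_sub (t:=t) HA HB (partner_some Hpw)).
Qed.

Lemma walk_back_ball (e Ma Mb : rel T) v y : is_graph e -> is_matching e Ma -> is_matching e Mb ->
  forall i u r0, walk Ma Mb y i = Some u -> u \in ball e r0 v -> y \in ball e (r0 + i) v.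
Proof.
move=> [Hsym _] HA HB; elim=> [|i IH] u r0.
  by move=> [<-]; rewrite addn0.
move=> /walk_back [z [Hz Hzu]] Hu.
have Hz' : z \in ball e r0.+1 v.
  by apply: ball_nb Hu _; rewrite Hsym; apply: (stepM_sub HA HB Hzu).
by rewrite addnS -addSn; apply: IH Hz'.
Qed.

End Local.

Section Local2.
Variables (T : finType) (k : nat).

Lemma params_agree e e' S S' (Ma Ma' Mb Mb' : rel T) R v y r :
  is_matching e Ma -> is_matching e Mb ->
  agree e e' S S' Ma Ma' Mb Mb' R v -> y \in ball e r v -> r + (2 * k + 2) <= R ->
  [/\ flip S Ma Mb y = flip S' Ma' Mb' y, J k S Ma Mb y = J k S' Ma' Mb' y &
      forall t, t <= 2 * k + 2 -> walk Ma Mb y t = walk Ma' Mb' y t].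
Proof.
move=> HA HB Hag Hy Hr.
have Hwalk := walk_agree HA HB Hag Hy.
have HyR : y \in ball e R v by apply: ball_mono Hy; lia.
have [H1 _ H3 H4] := Hag y HyR.
split.
- have EA : partner Ma y = partner Ma' y by apply: eq_pick => w /=; apply: H3.
  have EB : partner Mb y = partner Mb' y by apply: eq_pick => w /=; apply: H4.
  by rewrite /flip H1 EA EB.
- rewrite /J; congr (_.+1); apply: eq_in_find => j; rewrite mem_iota => /andP [Hj1 Hj2].
  have [Hw Hb] := Hwalk (2 * j) (ltac:(lia)).
  rewrite /good -Hw; case E: (walk Ma Mb y (2 * j)) => [c|] //.
  have HcR : c \in ball e R v by apply: ball_mono (Hb c E); lia.
  have [G1 _ _ G4] := Hag c HcR.
  have EB : partner Mb c = partner Mb' c by apply: eq_pick => w /=; apply: G4.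
  by rewrite G1 EB.
- by move=> t Ht; have [] := Hwalk t (ltac:(lia)).
Qed.

Lemma cat_one e e' S S' (Ma Ma' Mb Mb' : rel T) R v u :
  is_graph e -> is_matching e Ma -> is_matching e Mb -> 4 * k + 5 <= R ->
  agree e e' S S' Ma Ma' Mb Mb' R v -> u \in ball e 1 v ->
  (cf k S Ma Mb u -> cf k S' Ma' Mb' u) /\ (cc k S Ma Mb u -> cc k S' Ma' Mb' u).
Proof.
move=> He HA HB HR Hag Hu; split.
- case/cf_elim => y [i [Hf Hi Hw]].
  have HJ := J_le k S Ma Mb y.
  have Hy := walk_back_ball He HA HB Hw Hu.
  have [F1 F2 F3] := params_agree HA HB Hag Hy (ltac:(lia)).
  apply: (@cf_intro _ _ _ _ _ y i); first by rewrite -F1.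
    by rewrite -F2.
  by rewrite -F3 //; lia.
- case/cc_elim => y [Hf Hw].
  have HJ := J_le k S Ma Mb y.
  have Hy := walk_back_ball He HA HB Hw Hu.
  have [F1 F2 F3] := params_agree HA HB Hag Hy (ltac:(lia)).
  apply: (@cc_intro _ _ _ _ _ y); first by rewrite -F1.
  by rewrite -F2 -F3 //; lia.
Qed.

Lemma Mc0_local e e' S S' (Ma Ma' Mb Mb' : rel T) R v u w :
  valid_input e Ma Mb -> valid_input e' Ma' Mb' -> 4 * k + 5 <= R ->
  agree e e' S S' Ma Ma' Mb Mb' R v -> u \in ball e 1 v ->
  Mc0 k S Ma Mb u w = Mc0 k S' Ma' Mb' u w.
Proof.
move=> [He HA HB] [He' HA' HB'] HR Hag Hu.
have Hag' := agree_sym Hag.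
have Hu' : u \in ball e' 1 v.
  by rewrite -(@ball_eq _ e e' R v _ 1) //; [move=> x /Hag []|lia].
have [C1 C2] := cat_one He HA HB HR Hag Hu.
have [C1' C2'] := cat_one He' HA' HB' HR Hag' Hu'.
have Ecf : cf k S Ma Mb u = cf k S' Ma' Mb' u by apply/idP/idP; [apply: C1|apply: C1'].
have Ecc : cc k S Ma Mb u = cc k S' Ma' Mb' u by apply/idP/idP; [apply: C2|apply: C2'].
have HuR : u \in ball e R v by apply: ball_mono Hu; lia.
have [_ _ H3 H4] := Hag u HuR.
by rewrite /Mc0 Ecf Ecc H3 H4.
Qed.

Lemma Alg_local C : 4 * k + 5 <= C -> local_in C (Alg k (T:=T)).
Proof.
move=> HC e e' S S' Ma Ma' Mb Mb' v Hv Hv' Hag w.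
rewrite /Alg /Mc.
have Hv0 : v \in ball e 1 v by apply: ball_mono (ball_0 e v).
rewrite (Mc0_local w Hv Hv' HC Hag Hv0).
case E: (Mc0 k S' Ma' Mb' v w) => //=.
have Hvw : e v w.
  rewrite -(Mc0_local w Hv Hv' HC Hag Hv0) /Mc0 in E.
  case: Hv => _ [HAs _ _] [HBs _ _].
  by move: E; case: (cf _ _ _ _ _); [apply: HBs|case: (cc _ _ _ _ _) => //; apply: HAs].
apply: Mc0_local Hv Hv' HC Hag _.
exact: ball_nb (ball_0 e v) Hvw.
Qed.

End Local2.

Theorem lemma2p7 :
  exists C : nat, forall k : nat, 1 <= k ->
  forall T : finType, exists A : algorithm T,
    local_in (C * k) A /\
    forall (e : rel T) (S : {set T}) (Ma Mb : rel T),
      valid_input e Ma Mb ->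
      let Mc := A e S Ma Mb in
      [/\ is_matching e Mc,
          msize Ma <= msize Mc,
          #|VM Ma :\: (VM Mc :|: S)| <= #|(S :&: VM Mc) :\: VM Ma|
        & forall s : nat, s <= #|S :&: VM Mb| -> s <= #|S| ->
            (k - 1) * s <= k * #|S :&: VM Mc| ].
Proof.
exists 9 => k Hk T; exists (Alg k (T:=T)); split.
  by apply: Alg_local; lia.
move=> e S Ma Mb [He HA HB] /=.
have [Hi Hii] := prop_i_ii k S He HA HB.
split=> //; first exact: Mc_matching.
move=> s Hs _.
have H3 := prop_iii k S HA HB.
set SB := S :&: VM Mb in Hs H3 *.
set Mcr := Mc k S Ma Mb.
have Hsplit : #|SB| <= #|S :&: VM Mcr| + #|SB :\: VM Mcr|.
  rewrite -(cardsID (VM Mcr) SB) leq_add2r; apply: subset_leq_card.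
  by apply/subsetP => x; rewrite !inE => /andP [/andP [-> _] ->].
rewrite /Alg; rewrite /Mcr in Hsplit.
move: Hs H3 Hsplit.
move: #|SB :\: VM (Mc k S Ma Mb)| #|S :&: VM (Mc k S Ma Mb)| #|SB| => L a b H1 H2 H3.
have : (k - 1) * s <= (k - 1) * b by apply: leq_mul.
nia.
Qed.
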